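(* Let $p$ be a fixed point in $\mathbb{S}_1^3$ and $\gamma=\gamma(t)$ a timelike unit speed curve in $\mathbb{S}_1^2\subset T_p\mathbb{S}_1^3$ with geodesic curvature $\kappa_\gamma$. For any nonzero function $\eta(t)$, let $\alpha(t)=\exp_p(\eta(t)\gamma(t))=\cos(\eta(t))p+\sin(\eta(t))\gamma(t)$ be a timelike regular curve in $\mathbb{S}_1^3$ with geodesic curvature $\kappa_g$. Then $$\kappa_\gamma^2\le\frac{\|\alpha'\|^4\kappa_g^2}{\sin^2(\eta)},$$ with equality holding identically if and only if $\alpha$ is a timelike rectifying curve in $\mathbb{S}_1^3$.
   Context: Minkowski 4-space $\mathbb{R}_1^4$ is $\mathbb{R}^4$ with $\langle x,y\rangle=-x_1y_1+x_2y_2+x_3y_3+x_4y_4$, $\|x\|=\sqrt{|\langle x,x\rangle|}$; $\alpha'=d\alpha/dt$. De Sitter 3-space $\mathbb{S}_1^3=\{x:\langle x,x\rangle=1\}$. $\mathbb{S}_1^2\subset T_p\mathbb{S}_1^3$ is $\{w:\langle w,p\rangle=0,\langle w,w\rangle=1\}$. For a timelike unit speed curve $\gamma$ in this $\mathbb{S}_1^2$, its geodesic curvature is $\kappa_\gamma=\det(\gamma,\gamma',\gamma'',p)$, and $\gamma''=\gamma+\kappa_\gamma N_\gamma$ with $N_\gamma=p\times\gamma\times\gamma'$ (formal determinant with first row $(-e_1,e_2,e_3,e_4)$). For a timelike curve $\alpha$ in $\mathbb{S}_1^3$ with arc length $s$: $T_\alpha=d\alpha/ds$, $\kappa_g=\|dT_\alpha/ds-\alpha\|$,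 $N_\alpha=(dT_\alpha/ds-\alpha)/\kappa_g$. Throughout, curves are assumed non-geodesic ($\kappa_g>0$) and non-planar (geodesic torsion $\neq0$). $\alpha$ is a timelike rectifying curve (with respect to $p\notin\mathrm{Im}(\alpha)$) if at each point $\alpha(s)$ the tangent vector of the geodesic of $\mathbb{S}_1^3$ joining $p$ and $\alpha(s)$ is pseudo-orthogonal to $N_\alpha(s)$. *)

(* Defs.v *)
From Stdlib Require Import Reals.
From Coquelicot Require Import Coquelicot.
Open Scope R_scope.

Record V4 := mkV4 { v1 : R; v2 : R; v3 : R; v4 : R }.

Definition vadd (x y : V4) : V4 :=
  mkV4 (v1 x + v1 y) (v2 x + v2 y) (v3 x + v3 y) (v4 x + v4 y).
Definition vscale (k : R) (x : V4) : V4 :=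
  mkV4 (k * v1 x) (k * v2 x) (k * v3 x) (k * v4 x).
Definition vsub (x y : V4) : V4 := vadd x (vscale (-1) y).

Definition mdot (x y : V4) : R :=
  - v1 x * v1 y + v2 x * v2 y + v3 x * v3 y + v4 x * v4 y.
Definition mnorm (x : V4) : R := sqrt (Rabs (mdot x x)).

Definition det3 (a11 a12 a13 a21 a22 a23 a31 a32 a33 : R) : R :=
  a11 * (a22 * a33 - a23 * a32) - a12 * (a21 * a33 - a23 * a31)
  + a13 * (a21 * a32 - a22 * a31).
Definition det4 (x y z w : V4) : R :=
  v1 x * det3 (v2 y) (v3 y) (v4 y) (v2 z) (v3 z) (v4 z) (v2 w) (v3 w) (v4 w)
  - v2 x * det3 (v1 y) (v3 y) (v4 y) (v1 z) (v3 z) (v4 z) (v1 w) (v3 w) (v4 w)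
  + v3 x * det3 (v1 y) (v2 y) (v4 y) (v1 z) (v2 z) (v4 z) (v1 w) (v2 w) (v4 w)
  - v4 x * det3 (v1 y) (v2 y) (v3 y) (v1 z) (v2 z) (v3 z) (v1 w) (v2 w) (v3 w).

Definition dv (c : R -> V4) (t : R) : V4 :=
  mkV4 (Derive (fun u => v1 (c u)) t) (Derive (fun u => v2 (c u)) t)
       (Derive (fun u => v3 (c u)) t) (Derive (fun u => v4 (c u)) t).

Definition twice_diff_at (f : R -> R) (t : R) : Prop :=
  ex_derive f t /\ ex_derive (Derive f) t.

Definition curve_twice_diff_at (c : R -> V4) (t : R) : Prop :=
  twice_diff_at (fun u => v1 (c u)) t /\ twice_diff_at (fun u => v2 (c u)) t /\
  twice_diff_at (fun u => v3 (c u)) t /\ twice_diff_at (fun u => v4 (c u)) t.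

(* geodesic curvature of a curve gamma in S^2_1 ⊂ T_p S^3_1:
   kappa_gamma = det(gamma, gamma', gamma'', p) *)
Definition kappa_gamma (p : V4) (gam : R -> V4) (t : R) : R :=
  det4 (gam t) (dv gam t) (dv (dv gam) t) p.

(* u |-> exp_p(u q) = cos u p + sin u q, for q a unit spacelike vector
   tangent at p: the geodesic of S^3_1 starting at p in direction q. *)
Definition geod (p q : V4) (u : R) : V4 := vadd (vscale (cos u) p) (vscale (sin u) q).

Definition alpha (p : V4) (gam : R -> V4) (eta : R -> R) (t : R) : V4 :=
  geod p (gam t) (eta t).

(* Frenet data of a (timelike) curve c of S^3_1, w.r.t. arc length s:
   T = dc/ds = c'/||c'||,  dT/ds = (dT/dt)/||c'||,
   kappa_g = || dT/ds - c ||,  N = (dT/ds - c)/kappa_g. *)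
Definition T_of (c : R -> V4) (t : R) : V4 := vscale (/ mnorm (dv c t)) (dv c t).
Definition dTds (c : R -> V4) (t : R) : V4 := vscale (/ mnorm (dv c t)) (dv (T_of c) t).
Definition kappa_g (c : R -> V4) (t : R) : R := mnorm (vsub (dTds c t) (c t)).
Definition N_of (c : R -> V4) (t : R) : V4 :=
  vscale (/ kappa_g c t) (vsub (dTds c t) (c t)).

(* alpha is a timelike rectifying curve w.r.t. p on the open interval (a,b):
   at each alpha(t), the tangent vector of the geodesic u |-> exp_p(u gamma(t))
   joining p (u = 0) and alpha(t) (u = eta(t)), taken at alpha(t), is
   pseudo-orthogonal to N_alpha(t). *)
Definition is_rectifying (p : V4) (gam : R -> V4) (eta : R -> R) (a b : R) : Prop :=
  forall t, a < t < b ->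
    mdot (dv (geod p (gam t)) (eta t)) (N_of (alpha p gam eta) t) = 0.

(* Main.v *)
Require Import Defs.
From Stdlib Require Import Reals Lra.
From Coquelicot Require Import Coquelicot.
Open Scope R_scope.


Lemma ZDplus f g x a b : is_derive f x a -> is_derive g x b ->
  is_derive (fun u => f u + g u) x (a + b).
Proof. intros; now apply (is_derive_plus f g). Qed.
Lemma ZDmult f g x a b : is_derive f x a -> is_derive g x b ->
  is_derive (fun u => f u * g u) x (a * g x + f x * b).
Proof. intros; apply (is_derive_mult f g); auto; intros; apply Rmult_comm. Qed.
Lemma ZDconst c x : is_derive (fun _ => c) x 0.
Proof. apply (is_derive_const c). Qed.
Lemma ZDopp f x a : is_derive f x a -> is_derive (fun u => - f u) x (- a).
Proof. intros; now apply (is_derive_opp f). Qed.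
Lemma ZDcos f x a : is_derive f x a -> is_derive (fun u => cos (f u)) x (- sin (f x) * a).
Proof. intros H. pose proof (is_derive_comp cos f x _ _ (is_derive_cos (f x)) H) as K.
  replace (- sin (f x) * a) with (scal a (- sin (f x))); auto. unfold scal; simpl; unfold mult; simpl; ring. Qed.
Lemma ZDsin f x a : is_derive f x a -> is_derive (fun u => sin (f u)) x (cos (f x) * a).
Proof. intros H. pose proof (is_derive_comp sin f x _ _ (is_derive_sin (f x)) H) as K.
  replace (cos (f x) * a) with (scal a (cos (f x))); auto. unfold scal; simpl; unfold mult; simpl; ring. Qed.
Lemma ZDinv f x a : is_derive f x a -> f x <> 0 -> is_derive (fun u => / f u) x (- a / (f x)^2).
Proof. intros; now apply is_derive_inv. Qed.
Lemma ZDsqrt f x a : is_derive f x a -> 0 < f x -> is_derive (fun u => sqrt (f u)) x (a / (2 * sqrt (f x))).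
Proof. intros; now apply (is_derive_sqrt f). Qed.
Lemma ZDext (f g : R -> R) (x l l' : R) : locally x (fun u => f u = g u) -> is_derive f x l -> l = l' -> is_derive g x l'.
Proof. intros H1 H2 <-; exact (is_derive_ext_loc f g x l H1 H2). Qed.
Lemma loc_int a b t : a < t < b -> locally t (fun u => a < u < b).
Proof. intros H. apply (open_and _ _ (open_gt a) (open_lt b)). exact H. Qed.
Lemma const_der f c a b t l : a < t < b -> (forall u, a < u < b -> f u = c) -> is_derive f t l -> l = 0.
Proof. intros Ht Hc Hd.
  assert (K : is_derive (fun _ => c) t l).
  { apply (ZDext f _ t l l); auto. generalize (loc_int a b t Ht). apply filter_imp. auto. }
  pose proof (is_derive_unique _ _ _ K). rewrite Derive_const in H. auto. Qed.

Definition vder (c : R -> V4) t d :=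
  is_derive (fun u => v1 (c u)) t (v1 d) /\ is_derive (fun u => v2 (c u)) t (v2 d) /\
  is_derive (fun u => v3 (c u)) t (v3 d) /\ is_derive (fun u => v4 (c u)) t (v4 d).

Ltac dtac := repeat first [apply ZDplus | apply ZDmult | apply ZDopp | apply ZDconst].

Lemma Dmdot x y t dx dy : vder x t dx -> vder y t dy ->
  is_derive (fun u => mdot (x u) (y u)) t (mdot dx (y t) + mdot (x t) dy).
Proof.
  intros (X1&X2&X3&X4) (Y1&Y2&Y3&Y4). unfold mdot.
  eapply ZDext. apply filter_forall; reflexivity.
  apply ZDplus. apply ZDplus. apply ZDplus.
  apply ZDmult. apply ZDopp. exact X1. exact Y1.
  apply ZDmult. exact X2. exact Y2.
  apply ZDmult. exact X3. exact Y3.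
  apply ZDmult. exact X4. exact Y4.
  simpl. ring.
Qed.

Lemma V4_ext x y : v1 x = v1 y -> v2 x = v2 y -> v3 x = v3 y -> v4 x = v4 y -> x = y.
Proof. destruct x, y; simpl; intros; subst; reflexivity. Qed.

Lemma dv1 c t : v1 (dv c t) = Derive (fun u => v1 (c u)) t. Proof. reflexivity. Qed.
Lemma dv2 c t : v2 (dv c t) = Derive (fun u => v2 (c u)) t. Proof. reflexivity. Qed.
Lemma dv3 c t : v3 (dv c t) = Derive (fun u => v3 (c u)) t. Proof. reflexivity. Qed.
Lemma dv4 c t : v4 (dv c t) = Derive (fun u => v4 (c u)) t. Proof. reflexivity. Qed.

Lemma vder_dv c t d : vder c t d -> dv c t = d.
Proof. intros (H1&H2&H3&H4). apply V4_ext; rewrite ?dv1, ?dv2, ?dv3, ?dv4;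
  apply is_derive_unique; assumption. Qed.

Lemma vder_ex c t : ex_derive (fun u => v1 (c u)) t -> ex_derive (fun u => v2 (c u)) t ->
  ex_derive (fun u => v3 (c u)) t -> ex_derive (fun u => v4 (c u)) t -> vder c t (dv c t).
Proof. intros; repeat split; apply Derive_correct; assumption. Qed.

Lemma dT c t d : vder (dv c) t d -> locally t (fun u => mdot (dv c u) (dv c u) < 0) ->
  dv (T_of c) t = vadd (vscale (/ mnorm (dv c t)) d)
     (vscale (mdot (dv c t) d / mnorm (dv c t) ^ 3) (dv c t)).
Proof.
  intros HD Hloc.
  assert (Ht : mdot (dv c t) (dv c t) < 0) by exact (locally_singleton _ _ Hloc).
  assert (Hn : mnorm (dv c t) = sqrt (- mdot (dv c t) (dv c t))).
  { unfold mnorm. rewrite Rabs_left; auto. }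
  assert (Hpos : 0 < sqrt (- mdot (dv c t) (dv c t))) by (apply sqrt_lt_R0; lra).
  assert (Hloc2 : locally t (fun u => / sqrt (- mdot (dv c u) (dv c u)) = / mnorm (dv c u))).
  { eapply filter_imp; [|exact Hloc]. intros u Hu. simpl in Hu. unfold mnorm. rewrite Rabs_left; auto. }
  assert (Dn : is_derive (fun u => / sqrt (- mdot (dv c u) (dv c u))) t
     (- (- (mdot d (dv c t) + mdot (dv c t) d) / (2 * sqrt (- mdot (dv c t) (dv c t))))
       / (sqrt (- mdot (dv c t) (dv c t)))^2)).
  { apply (ZDinv (fun u => sqrt (- mdot (dv c u) (dv c u)))).
    apply (ZDsqrt (fun u => - mdot (dv c u) (dv c u))).
    apply (ZDopp (fun u => mdot (dv c u) (dv c u))). apply Dmdot; auto. simpl; lra. simpl; lra. }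
  assert (Hsym : mdot d (dv c t) = mdot (dv c t) d) by (unfold mdot; ring).
  rewrite Hsym in Dn. rewrite Hn. clear Hn.
  destruct HD as (D1&D2&D3&D4).
  assert (HL : forall (f g : R -> R), (forall u, g u = / mnorm (dv c u) * f u) ->
     forall l, is_derive f t l -> is_derive g t (/ sqrt (- mdot (dv c t) (dv c t)) * l +
        mdot (dv c t) d / sqrt (- mdot (dv c t) (dv c t)) ^ 3 * f t)).
  { intros f g Hg l Hf. eapply ZDext; [ | apply ZDmult; [exact Dn | exact Hf] | ].
    eapply filter_imp; [|exact Hloc2]; intros u Hu; cbv beta in Hu; rewrite Hg, Hu; reflexivity.
    cbv beta. field. lra. }
  apply V4_ext; [rewrite (dv1 (T_of c)) | rewrite (dv2 (T_of c)) | rewrite (dv3 (T_of c)) | rewrite (dv4 (T_of c))];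
  apply is_derive_unique; cbn [v1 v2 v3 v4 vadd vscale].
  apply (HL (fun u => v1 (dv c u))); [reflexivity | exact D1].
  apply (HL (fun u => v2 (dv c u))); [reflexivity | exact D2].
  apply (HL (fun u => v3 (dv c u))); [reflexivity | exact D3].
  apply (HL (fun u => v4 (dv c u))); [reflexivity | exact D4].
Qed.

Lemma ZDext' (f g : R -> R) (x l l' : R) : is_derive f x l -> (forall u, f u = g u) -> l = l' -> is_derive g x l'.
Proof. intros H1 H2 H3. apply (ZDext f g x l l'); auto. apply filter_forall; auto. Qed.
Lemma ZDextl (f g : R -> R) (x l l' : R) : is_derive f x l -> locally x (fun u => f u = g u) -> l = l' -> is_derive g x l'.
Proof. intros H1 H2 H3. apply (ZDext f g x l l'); auto. Qed.

Definition v0 := mkV4 0 0 0 0.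
Lemma vder_const c t : vder (fun _ => c) t v0.
Proof. unfold vder, v0; simpl; split; [|split; [|split]]; apply ZDconst. Qed.
Lemma mdot_0r x : mdot x v0 = 0. Proof. unfold mdot, v0; simpl; ring. Qed.
Lemma mdot_sym x y : mdot x y = mdot y x. Proof. unfold mdot; ring. Qed.

Lemma gram_det x y z w :
  det4 x y z w ^ 2 = - det4 (mkV4 (mdot x x) (mdot x y) (mdot x z) (mdot x w))
                            (mkV4 (mdot y x) (mdot y y) (mdot y z) (mdot y w))
                            (mkV4 (mdot z x) (mdot z y) (mdot z z) (mdot z w))
                            (mkV4 (mdot w x) (mdot w y) (mdot w z) (mdot w w)).
Proof. destruct x, y, z, w. unfold det4, det3, mdot; simpl. ring. Qed.

Definition gdot (S a1 a2 a3 a4 b1 b2 b3 b4 : R) :=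
  a1*b1 + a2*b2 + a2*b4 + a4*b2 - a3*b3 + a4*b4*S.

Definition comb (p g g1 g2 : V4) (c1 c2 c3 c4 : R) :=
  vadd (vscale c1 p) (vadd (vscale c2 g) (vadd (vscale c3 g1) (vscale c4 g2))).

Lemma mdot_comb p g g1 g2 S a1 a2 a3 a4 b1 b2 b3 b4 :
  mdot p p = 1 -> mdot g p = 0 -> mdot g1 p = 0 -> mdot g2 p = 0 ->
  mdot g g = 1 -> mdot g g1 = 0 -> mdot g g2 = 1 -> mdot g1 g1 = -1 ->
  mdot g1 g2 = 0 -> mdot g2 g2 = S ->
  mdot (comb p g g1 g2 a1 a2 a3 a4) (comb p g g1 g2 b1 b2 b3 b4) =
  gdot S a1 a2 a3 a4 b1 b2 b3 b4.
Proof.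
  intros H1 H2 H3 H4 H5 H6 H7 H8 H9 H10.
  assert (E : mdot (comb p g g1 g2 a1 a2 a3 a4) (comb p g g1 g2 b1 b2 b3 b4) =
    a1*b1*mdot p p + a1*b2*mdot g p + a1*b3*mdot g1 p + a1*b4*mdot g2 p
  + a2*b1*mdot g p + a2*b2*mdot g g + a2*b3*mdot g g1 + a2*b4*mdot g g2
  + a3*b1*mdot g1 p + a3*b2*mdot g g1 + a3*b3*mdot g1 g1 + a3*b4*mdot g1 g2
  + a4*b1*mdot g2 p + a4*b2*mdot g g2 + a4*b3*mdot g1 g2 + a4*b4*mdot g2 g2).
  { destruct p, g, g1, g2. unfold comb, mdot; simpl. ring. }
  rewrite E, H1, H2, H3, H4, H5, H6, H7, H8, H9, H10. unfold gdot. ring.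
Qed.

Lemma gram_val p g g1 g2 S :
  mdot p p = 1 -> mdot g p = 0 -> mdot g1 p = 0 -> mdot g2 p = 0 ->
  mdot g g = 1 -> mdot g g1 = 0 -> mdot g g2 = 1 -> mdot g1 g1 = -1 ->
  mdot g1 g2 = 0 -> mdot g2 g2 = S -> det4 g g1 g2 p ^ 2 = S - 1.
Proof.
  intros H1 H2 H3 H4 H5 H6 H7 H8 H9 H10. rewrite gram_det.
  rewrite (mdot_sym g1 g), (mdot_sym g2 g), (mdot_sym g2 g1), (mdot_sym p g), (mdot_sym p g1), (mdot_sym p g2).
  rewrite H1, H2, H3, H4, H5, H6, H7, H8, H9, H10. unfold det4, det3; simpl. ring.
Qed.

Lemma ident co s e1 e2 S q m x1 x2 x3 x4 :
  co^2 + s^2 = 1 -> q * (s^2 - e1^2) = 1 ->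
  m = gdot S (-s*e1) (co*e1) s 0 (-co*e1^2 - s*e2) (-s*e1^2 + co*e2) (2*co*e1) s ->
  x1 = q*(-co*e1^2 - s*e2) + m*q^2*(-s*e1) - co ->
  x2 = q*(-s*e1^2 + co*e2) + m*q^2*(co*e1) - s ->
  x3 = q*(2*co*e1) + m*q^2*s ->
  x4 = q*s + m*q^2*0 ->
  gdot S x1 x2 x3 x4 x1 x2 x3 x4 * s^2 =
  (s^2 - e1^2) * (gdot S (-s) co 0 0 x1 x2 x3 x4)^2 + s^4*(S-1)*q^2.
Proof.
  intros Hc Hq -> -> -> -> ->. unfold gdot.
  match goal with |- ?L = ?R => assert (H : L - R = (co^2+s^2-1)*((1)*e1^2*e2^2*q^2 + (2)*e1^4*e2^2*q^3 + (1)*e1^6*e2^2*q^4 + (1)*s^2 + (2)*s^2*e1^2*q + (-3)*s^2*e1^2*q^2 + (1)*s^2*e1^2*e2^2*q^2 + (1)*s^2*e1^4*q^2 + (-2)*s^2*e1^4*q^3 + (2)*s^2*e1^4*e2^2*q^3 + (1)*s^2*e1^6*q^4 + (1)*s^2*e1^6*e2^2*q^4 + (-1)*s^4*q^2 + (-1)*s^4*e2^2*q^2 + (4)*s^4*e1^2*q^3 + (-1)*s^4*e1^2*e2^2*q^4 + (2)*s^4*e1^4*e2^2*q^3 + (1)*s^4*e1^6*e2^2*q^4 + (-1)*s^6*e1^2*q^4 + (-2)*s^6*e1^2*e2^2*q^3 + (-1)*s^6*e1^2*e2^2*q^4 + (1)*s^6*e1^6*e2^2*q^4 + (-1)*s^8*e1^4*e2^2*q^4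 + (2)*co*s*e1^2*e2*q^2 + (-2)*co*s*e1^6*e2*q^4 + (-2)*co*s^3*e2*q^2 + (-4)*co*s^3*e1^2*e2*q^3 + (-2)*co*s^3*e1^6*e2*q^4 + (2)*co*s^5*e1^2*e2*q^4 + (-2)*co*s^5*e1^6*e2*q^4 + (2)*co*s^7*e1^4*e2*q^4 + (1)*co^2*e1^2*e2^2*q^2 + (2)*co^2*e1^4*e2^2*q^3 + (1)*co^2*e1^6*e2^2*q^4 + (-1)*co^2*s^2*e2^2*q^2 + (-2)*co^2*s^2*e1^4*q^3 + (4)*co^2*s^2*e1^4*e2^2*q^3 + (1)*co^2*s^2*e1^6*q^4 + (2)*co^2*s^2*e1^6*e2^2*q^4 + (2)*co^2*s^4*e1^2*q^3 + (-4)*co^2*s^4*e1^2*e2^2*q^3 + (-1)*co^2*s^4*e1^2*e2^2*q^4 + (1)*co^2*s^4*e1^6*q^4 + (3)*co^2*s^4*e1^6*e2^2*q^4 + (-1)*co^2*s^6*e1^4*q^4 + (-3)*co^2*s^6*e1^4*e2^2*q^4 + (-2)*co^3*s*e1^6*e2*q^4 + (-4)*co^3*s^3*e1^6*e2*q^4 + (4)*co^3*s^5*e1^4*e2*q^4 + (2)*co^4*e1^4*e2^2*q^3 + (1)*co^4*e1^6*e2^2*q^4 + (-2)*co^4*s^2*e1^2*e2^2*q^3 + (1)*co^4*s^2*e1^6*q^4 + (3)*co^4*s^2*e1^6*e2^2*q^4 + (-1)*co^4*s^4*e1^4*q^4 + (-3)*co^4*s^4*e1^4*e2^2*q^4 +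 (-2)*co^5*s*e1^6*e2*q^4 + (2)*co^5*s^3*e1^4*e2*q^4 + (1)*co^6*e1^6*e2^2*q^4 + (-1)*co^6*s^2*e1^4*e2^2*q^4) + (q*(s^2-e1^2)-1)*((-1)*e1^2*e2^2*q^2 + (-1)*e1^4*e2^2*q^3 + (-1)*s^2 + (-1)*s^2*e1^2*q + (3)*s^2*e1^2*q^2 + (-1)*s^2*e1^2*e2^2*q^3 + (-1)*s^2*e1^4*q^3 + (1)*s^4*q + (-3)*s^4*e1^2*q^2 + (-1)*s^4*e1^2*q^3 + (1)*s^4*e1^4*q^3 + (1)*s^6*e1^2*q^3 + (-2)*co*s*e1^2*e2*q^2 + (2)*co*s*e1^4*e2*q^3 + (2)*co*s^3*e1^2*e2*q^3)) by ring end.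
  assert (Z1 : co^2+s^2-1 = 0) by lra. assert (Z2 : q*(s^2-e1^2)-1 = 0) by lra.
  rewrite Z1, Z2 in H. lra.
Qed.

Lemma final K E F S s v q n k : 0 < v -> q * v = 1 -> K^2 = S - 1 -> s <> 0 ->
  E * s^2 = v * F^2 + s^4 * (S - 1) * q^2 -> n^2 = v -> k = sqrt (Rabs E) -> 0 < k ->
  K^2 <= n^4 * k^2 / s^2 /\ (K^2 = n^4 * k^2 / s^2 <-> / k * F = 0).
Proof.
  intros Hv Hq HK Hs HE Hn Hk Hk0.
  assert (Hs2 : 0 < s^2) by (apply pow2_gt_0; auto).
  assert (HE0 : 0 <= E).
  { assert (0 <= E * s^2) by (rewrite HE; rewrite <- HK; nra). nra. }
  assert (Hk2 : k^2 = E) by (rewrite Hk, pow2_sqrt, Rabs_right; lra || apply Rabs_pos).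
  assert (Hq' : q = / v) by (field_simplify_eq; lra || lra).
  assert (HH : n^4 * k^2 / s^2 = K^2 + v^3 * F^2 / s^4).
  { replace (n^4) with (v^2) by (rewrite <- Hn; ring). rewrite Hk2.
    assert (E = (v * F^2 + s^4 * (S-1) * q^2) / s^2) by (rewrite <- HE; field; auto).
    rewrite H, Hq', HK. field. split; lra. }
  assert (Hs4 : 0 < s^4) by (replace (s^4) with ((s^2)^2) by ring; apply pow_lt; lra).
  assert (Hw : 0 < v^3 / s^4) by (apply Rdiv_lt_0_compat; [apply pow_lt; lra | lra]).
  rewrite HH. split.
  - assert (0 <= v^3 * F^2 / s^4). { replace (v^3 * F^2 / s^4) with (v^3/s^4 * F^2) by (field; auto). nra. } lra.
  - split.
    + intros H0. assert (v^3/s^4 * F^2 = 0) by (replace (v^3/s^4*F^2) with (v^3*F^2/s^4) by (field; auto); lra).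
      apply Rmult_integral in H. destruct H as [H|H]; [lra|]. destruct (Req_dec F 0) as [HF|HF]; [rewrite HF; ring | exfalso; exact (pow_nonzero F 2 HF H)].
    + intros H0. assert (F = 0).
      { apply Rmult_integral in H0. destruct H0 as [H0|H0]; auto. exfalso. apply Rinv_neq_0_compat in H0; lra. }
      rewrite H; field; auto.
Qed.

Lemma Dal1 (eta f : R -> R) u e1 f1 pi : is_derive eta u e1 -> is_derive f u f1 ->
  is_derive (fun w => cos (eta w) * pi + sin (eta w) * f w) u
    (- sin (eta u) * e1 * pi + (cos (eta u) * e1 * f u + sin (eta u) * f1)).
Proof.
  intros He Hf. eapply ZDext'.
  apply (ZDplus (fun w => cos (eta w) * pi) (fun w => sin (eta w) * f w)).
  apply (ZDmult (fun w => cos (eta w)) (fun _ => pi)). apply ZDcos; exact He. apply ZDconst.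
  apply (ZDmult (fun w => sin (eta w)) f). apply ZDsin; exact He. exact Hf.
  intro; reflexivity. ring.
Qed.

Lemma Dal2 (eta E1 f f1 : R -> R) t e2 f2 pi : is_derive eta t (E1 t) -> is_derive E1 t e2 ->
  is_derive f t (f1 t) -> is_derive f1 t f2 ->
  is_derive (fun w => - sin (eta w) * E1 w * pi + (cos (eta w) * E1 w * f w + sin (eta w) * f1 w)) t
    ((- cos (eta t) * E1 t ^ 2 - sin (eta t) * e2) * pi + (- sin (eta t) * E1 t ^ 2 + cos (eta t) * e2) * f t
     + 2 * cos (eta t) * E1 t * f1 t + sin (eta t) * f2).
Proof.
  intros He He2 Hf Hf2. eapply ZDext'.
  apply (ZDplus (fun w => - sin (eta w) * E1 w * pi) (fun w => cos (eta w) * E1 w * f w + sin (eta w) * f1 w)).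
  apply (ZDmult (fun w => - sin (eta w) * E1 w) (fun _ => pi)).
  apply (ZDmult (fun w => - sin (eta w)) E1). apply (ZDopp (fun w => sin (eta w))). apply ZDsin; exact He. exact He2.
  apply ZDconst.
  apply (ZDplus (fun w => cos (eta w) * E1 w * f w) (fun w => sin (eta w) * f1 w)).
  apply (ZDmult (fun w => cos (eta w) * E1 w) f).
  apply (ZDmult (fun w => cos (eta w)) E1). apply ZDcos; exact He. exact He2. exact Hf.
  apply (ZDmult (fun w => sin (eta w)) f1). apply ZDsin; exact He. exact Hf2.
  intro; reflexivity. ring.
Qed.

Lemma mdot_scale_r c x y : mdot x (vscale c y) = c * mdot x y.
Proof. unfold mdot, vscale; simpl; ring. Qed.


Theorem theorem3p5 (p : V4) (gam : R -> V4) (eta : R -> R) (a b : R) :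
  a < b ->
  mdot p p = 1 ->
  (forall t, a < t < b ->
     mdot (gam t) p = 0 /\ mdot (gam t) (gam t) = 1 /\
     mdot (dv gam t) (dv gam t) = -1) ->
  (forall t, a < t < b -> curve_twice_diff_at gam t /\ twice_diff_at eta t) ->
  (forall t, a < t < b -> eta t <> 0) ->
  (forall t, a < t < b ->
     mdot (dv (alpha p gam eta) t) (dv (alpha p gam eta) t) < 0) ->
  (forall t, a < t < b -> 0 < kappa_g (alpha p gam eta) t) ->
  (forall t, a < t < b ->
     (kappa_gamma p gam t) ^ 2 <=
     (mnorm (dv (alpha p gam eta) t)) ^ 4 * (kappa_g (alpha p gam eta) t) ^ 2
       / (sin (eta t)) ^ 2) /\
  ((forall t, a < t < b ->
     (kappa_gamma p gam t) ^ 2 =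
     (mnorm (dv (alpha p gam eta) t)) ^ 4 * (kappa_g (alpha p gam eta) t) ^ 2
       / (sin (eta t)) ^ 2)
   <-> is_rectifying p gam eta a b).
Proof.
  intros Hab Hp Hg Hd Hne Htl Hkg.
  assert (Dg : forall u, a < u < b -> vder gam u (dv gam u)).
  { intros u Hu. destruct (Hd u Hu) as [((A1&_)&(A2&_)&(A3&_)&(A4&_)) _]. apply vder_ex; auto. }
  assert (Dg2 : forall u, a < u < b -> vder (dv gam) u (dv (dv gam) u)).
  { intros u Hu. destruct (Hd u Hu) as [((_&A1)&(_&A2)&(_&A3)&(_&A4)) _]. apply vder_ex; auto. }
  assert (De : forall u, a < u < b -> is_derive eta u (Derive eta u)).
  { intros u Hu. destruct (Hd u Hu) as [_ [A _]]. apply Derive_correct; auto. }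
  assert (De2 : forall u, a < u < b -> is_derive (Derive eta) u (Derive (Derive eta) u)).
  { intros u Hu. destruct (Hd u Hu) as [_ [_ A]]. apply Derive_correct; auto. }
  assert (Gp1 : forall u, a < u < b -> mdot (dv gam u) p = 0).
  { intros u Hu. apply (const_der (fun w => mdot (gam w) p) 0 a b u); auto.
    intros w Hw; apply Hg; auto.
    pose proof (Dmdot gam (fun _ => p) u _ _ (Dg u Hu) (vder_const p u)) as K.
    cbv beta in K. rewrite mdot_0r, Rplus_0_r in K. exact K. }
  assert (G01 : forall u, a < u < b -> mdot (gam u) (dv gam u) = 0).
  { intros u Hu. 
    assert (H : mdot (dv gam u) (gam u) + mdot (gam u) (dv gam u) = 0).
    { apply (const_der (fun w => mdot (gam w) (gam w)) 1 a b u); auto.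
      intros w Hw; apply Hg; auto. apply Dmdot; apply Dg; auto. }
    rewrite mdot_sym in H. lra. }

  assert (KEY : forall t, a < t < b ->
     (kappa_gamma p gam t) ^ 2 <=
     (mnorm (dv (alpha p gam eta) t)) ^ 4 * (kappa_g (alpha p gam eta) t) ^ 2
       / (sin (eta t)) ^ 2 /\
     ((kappa_gamma p gam t) ^ 2 =
     (mnorm (dv (alpha p gam eta) t)) ^ 4 * (kappa_g (alpha p gam eta) t) ^ 2
       / (sin (eta t)) ^ 2 <->
      mdot (dv (geod p (gam t)) (eta t)) (N_of (alpha p gam eta) t) = 0)).
  2: { split. intros t Ht; apply KEY; auto.
       split. intros H t Ht. apply KEY; auto. intros H t Ht. apply KEY; auto. }
  intros t Ht.
  assert (Gp2 : mdot (dv (dv gam) t) p = 0).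
  { apply (const_der (fun w => mdot (dv gam w) p) 0 a b t); auto.
    pose proof (Dmdot (dv gam) (fun _ => p) t _ _ (Dg2 t Ht) (vder_const p t)) as K.
    cbv beta in K. rewrite mdot_0r, Rplus_0_r in K. exact K. }
  assert (G02 : mdot (gam t) (dv (dv gam) t) = 1).
  { assert (H : mdot (dv gam t) (dv gam t) + mdot (gam t) (dv (dv gam) t) = 0).
    { apply (const_der (fun w => mdot (gam w) (dv gam w)) 0 a b t); auto.
      apply Dmdot; [apply Dg | apply Dg2]; auto. }
    destruct (Hg t Ht) as (_&_&H3). lra. }
  assert (G12 : mdot (dv gam t) (dv (dv gam) t) = 0).
  { assert (H : mdot (dv (dv gam) t) (dv gam t) + mdot (dv gam t) (dv (dv gam) t) = 0).
    { apply (const_der (fun w => mdot (dv gam w) (dv gam w)) (-1) a b t); auto.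
      intros w Hw; apply Hg; auto. apply Dmdot; apply Dg2; auto. }
    rewrite mdot_sym in H. lra. }
  destruct (Hg t Ht) as (G0p & G00 & G11).
  pose proof (Gp1 t Ht) as G1p. pose proof (G01 t Ht) as G01t.
  set (G := gam t) in *. set (G1 := dv gam t) in *. set (G2 := dv (dv gam) t) in *.
  set (S := mdot G2 G2).

  set (A1f := fun u => vadd (vscale (- sin (eta u) * Derive eta u) p)
          (vadd (vscale (cos (eta u) * Derive eta u) (gam u)) (vscale (sin (eta u)) (dv gam u)))).
  assert (HA1 : forall u, a < u < b -> dv (alpha p gam eta) u = A1f u).
  { intros u Hu. apply vder_dv. destruct (Dg u Hu) as (X1&X2&X3&X4).
    split; [|split; [|split]].
    - eapply ZDext'. apply (Dal1 eta (fun w => v1 (gam w)) u _ _ (v1 p) (De u Hu) X1).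
      intro; reflexivity. unfold A1f; cbn [v1 vadd vscale]; simpl; ring.
    - eapply ZDext'. apply (Dal1 eta (fun w => v2 (gam w)) u _ _ (v2 p) (De u Hu) X2).
      intro; reflexivity. unfold A1f; cbn [v2 vadd vscale]; simpl; ring.
    - eapply ZDext'. apply (Dal1 eta (fun w => v3 (gam w)) u _ _ (v3 p) (De u Hu) X3).
      intro; reflexivity. unfold A1f; cbn [v3 vadd vscale]; simpl; ring.
    - eapply ZDext'. apply (Dal1 eta (fun w => v4 (gam w)) u _ _ (v4 p) (De u Hu) X4).
      intro; reflexivity. unfold A1f; cbn [v4 vadd vscale]; simpl; ring. }
  set (co := cos (eta t)). set (s := sin (eta t)). set (e1 := Derive eta t).
  set (e2 := Derive (Derive eta) t).
  set (A2 := comb p G G1 G2 (-co*e1^2 - s*e2) (-s*e1^2 + co*e2) (2*co*e1) s).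
  assert (HA2 : vder (dv (alpha p gam eta)) t A2).
  { destruct (Dg t Ht) as (X1&X2&X3&X4). destruct (Dg2 t Ht) as (Y1&Y2&Y3&Y4).
    assert (Hl := loc_int a b t Ht).
    split; [|split; [|split]].
    - eapply ZDextl. apply (Dal2 eta (Derive eta) (fun w => v1 (gam w)) (fun w => v1 (dv gam w)) t _ _ (v1 p) (De t Ht) (De2 t Ht) X1 Y1).
      eapply filter_imp; [|exact Hl]. intros w Hw. rewrite (HA1 w Hw). reflexivity.
      unfold A2, comb; cbn [v1 vadd vscale]; simpl; unfold co, s, e1, e2, G; ring.
    - eapply ZDextl. apply (Dal2 eta (Derive eta) (fun w => v2 (gam w)) (fun w => v2 (dv gam w)) t _ _ (v2 p) (De t Ht) (De2 t Ht) X2 Y2).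
      eapply filter_imp; [|exact Hl]. intros w Hw. rewrite (HA1 w Hw). reflexivity.
      unfold A2, comb; cbn [v2 vadd vscale]; simpl; unfold co, s, e1, e2, G; ring.
    - eapply ZDextl. apply (Dal2 eta (Derive eta) (fun w => v3 (gam w)) (fun w => v3 (dv gam w)) t _ _ (v3 p) (De t Ht) (De2 t Ht) X3 Y3).
      eapply filter_imp; [|exact Hl]. intros w Hw. rewrite (HA1 w Hw). reflexivity.
      unfold A2, comb; cbn [v3 vadd vscale]; simpl; unfold co, s, e1, e2, G; ring.
    - eapply ZDextl. apply (Dal2 eta (Derive eta) (fun w => v4 (gam w)) (fun w => v4 (dv gam w)) t _ _ (v4 p) (De t Ht) (De2 t Ht) X4 Y4).
      eapply filter_imp; [|exact Hl]. intros w Hw. rewrite (HA1 w Hw). reflexivity.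
      unfold A2, comb; cbn [v4 vadd vscale]; simpl; unfold co, s, e1, e2, G; ring. }
  assert (Hloc : locally t (fun u => mdot (dv (alpha p gam eta) u) (dv (alpha p gam eta) u) < 0)).
  { eapply filter_imp; [|exact (loc_int a b t Ht)]. intros w Hw. apply Htl; auto. }
  pose proof (dT (alpha p gam eta) t A2 HA2 Hloc) as HT.

  assert (Gram : forall a1 a2 a3 a4 b1 b2 b3 b4,
    mdot (comb p G G1 G2 a1 a2 a3 a4) (comb p G G1 G2 b1 b2 b3 b4) = gdot S a1 a2 a3 a4 b1 b2 b3 b4).
  { intros. apply mdot_comb; auto. }
  assert (HA1t : dv (alpha p gam eta) t = comb p G G1 G2 (-s*e1) (co*e1) s 0).
  { rewrite (HA1 t Ht). apply V4_ext; unfold A1f, comb; cbn [v1 v2 v3 v4 vadd vscale]; simpl;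
    unfold co, s, e1, G, G1; ring. }
  assert (Hal : alpha p gam eta t = comb p G G1 G2 co s 0 0).
  { apply V4_ext; unfold alpha, geod, comb; cbn [v1 v2 v3 v4 vadd vscale]; simpl;
    unfold co, s, G; ring. }
  assert (HP : dv (geod p G) (eta t) = comb p G G1 G2 (-s) co 0 0).
  { apply vder_dv. split; [|split; [|split]].
    - eapply ZDext'; [apply (Dal1 (fun w => w) (fun _ => v1 G) (eta t) 1 0 (v1 p) (is_derive_id _) (ZDconst _ _)) | intro; reflexivity | ].
      unfold comb; cbn [v1 v2 v3 v4 vadd vscale]; simpl; unfold s, co; ring.
    - eapply ZDext'; [apply (Dal1 (fun w => w) (fun _ => v2 G) (eta t) 1 0 (v2 p) (is_derive_id _) (ZDconst _ _)) | intro; reflexivity | ].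
      unfold comb; cbn [v1 v2 v3 v4 vadd vscale]; simpl; unfold s, co; ring.
    - eapply ZDext'; [apply (Dal1 (fun w => w) (fun _ => v3 G) (eta t) 1 0 (v3 p) (is_derive_id _) (ZDconst _ _)) | intro; reflexivity | ].
      unfold comb; cbn [v1 v2 v3 v4 vadd vscale]; simpl; unfold s, co; ring.
    - eapply ZDext'; [apply (Dal1 (fun w => w) (fun _ => v4 G) (eta t) 1 0 (v4 p) (is_derive_id _) (ZDconst _ _)) | intro; reflexivity | ].
      unfold comb; cbn [v1 v2 v3 v4 vadd vscale]; simpl; unfold s, co; ring. }
  set (n := mnorm (dv (alpha p gam eta) t)) in *.
  assert (Hn2 : n^2 = s^2 - e1^2).
  { unfold n, mnorm. rewrite pow2_sqrt by apply Rabs_pos. rewrite Rabs_left by (apply Htl; auto).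
    rewrite HA1t, Gram. unfold gdot. pose proof (sin2_cos2 (eta t)) as SC. fold s co in SC.
    unfold Rsqr in SC. nra. }
  assert (Hn0 : 0 < n).
  { unfold n, mnorm. apply sqrt_lt_R0. pose proof (Htl t Ht). rewrite Rabs_left; lra. }
  assert (Hs0 : s <> 0).
  { intro H0. rewrite H0 in Hn2. nra. }
  set (m := mdot (dv (alpha p gam eta) t) A2) in *.
  set (q := / n^2).
  assert (Hq : q * (s^2 - e1^2) = 1). { unfold q. rewrite <- Hn2. field. lra. }
  assert (HX : vsub (dTds (alpha p gam eta) t) (alpha p gam eta t) =
     comb p G G1 G2 (q*(-co*e1^2 - s*e2) + m*q^2*(-s*e1) - co)
       (q*(-s*e1^2 + co*e2) + m*q^2*(co*e1) - s)
       (q*(2*co*e1) + m*q^2*s) (q*s + m*q^2*0)).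
  { unfold dTds. fold n. rewrite HT, Hal. rewrite HA1t. unfold A2, q.
    apply V4_ext; unfold comb, vsub; cbn [v1 v2 v3 v4 vadd vscale]; field; lra. }
  assert (Hm : m = gdot S (-s*e1) (co*e1) s 0 (-co*e1^2 - s*e2) (-s*e1^2 + co*e2) (2*co*e1) s).
  { unfold m. rewrite HA1t. unfold A2. apply Gram. }
  assert (Hk : kappa_g (alpha p gam eta) t = sqrt (Rabs (mdot (vsub (dTds (alpha p gam eta) t) (alpha p gam eta t)) (vsub (dTds (alpha p gam eta) t) (alpha p gam eta t))))) by reflexivity.
  assert (HN : N_of (alpha p gam eta) t = vscale (/ kappa_g (alpha p gam eta) t) (vsub (dTds (alpha p gam eta) t) (alpha p gam eta t))) by reflexivity.
  rewrite HN, HP, mdot_scale_r. rewrite HX in Hk |- *. rewrite Gram in Hk |- *.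
  assert (HK : kappa_gamma p gam t ^ 2 = S - 1).
  { unfold kappa_gamma. apply gram_val; auto. }
  assert (SC : co^2 + s^2 = 1).
  { pose proof (sin2_cos2 (eta t)) as SC. fold s co in SC. unfold Rsqr in SC. lra. }
  pose proof (ident co s e1 e2 S q m _ _ _ _ SC Hq Hm eq_refl eq_refl eq_refl eq_refl) as HI.
  assert (Hv : 0 < s^2 - e1^2) by nra.
  eapply final; [ exact Hv | exact Hq | exact HK | exact Hs0 | exact HI | exact Hn2 | exact Hk | apply Hkg; auto ].
Qed.
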